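(* Let $k,d,b,\tilde b\ge0$ be measurable on $\mathbb{R}_+$ with $\int_0^{+\infty}k=\int_0^{+\infty}d=+\infty$ and $1<\int_0^{+\infty}\big(b(a)e^{-\int_0^ak}+\tilde b(a)e^{-\int_0^ad}\big)da<+\infty$. Let $c,\eta,\tilde c\in L^\infty_{loc}(\mathbb{R}^2)$ vanish at $(0,0)$, be nonnegative on $\mathbb{R}_+^2$, set $c_{tot}=c+\eta$, and assume $\partial_xc_{tot}>0$, $\partial_yc_{tot}\ge0$, $\partial_x\tilde c\ge0$, $\partial_y\tilde c>0$ and, for all $x_0,y_0\ge0$, $\tilde c(x_0,y)\to+\infty$ as $y\to+\infty$ and $c(x,y_0)\to+\infty$ as $x\to+\infty$. Assume moreover $$\Big\|\frac{\partial c_{tot}}{\partial y}\Big\|_\infty\le\inf_{(x,y)\in\mathbb{R}_+^2}\frac{\partial c_{tot}}{\partial x}(x,y).$$ Then every nonnegative solution $(N_1^*,N_2^* )$ of the steady-state system $$\int_0^{+\infty}\tilde b(a)e^{-\int_0^ad(u)du-\tilde c(N_1,N_2)a}da\cdot\int_0^{+\infty}\big(k(a)+\eta(N_1,N_2)\big)e^{-\int_0^ak(u)du-c_{tot}(N_1,N_2)a}da+\int_0^{+\infty}b(a)e^{-\int_0^ak(u)du-c_{tot}(N_1,N_2)a}da=1,$$ $$N_1\int_0^{+\infty}e^{-\int_0^ad(u)du-\tilde c(N_1,N_2)a}da\cdot\int_0^{+\infty}\big(k(a)+\eta(N_1,N_2)\big)e^{-\int_0^ak(u)du-c_{tot}(N_1,N_2)a}da-N_2\int_0^{+\infty}e^{-\int_0^ak(u)du-c_{tot}(N_1,N_2)a}da=0$$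 satisfies $N_1^*+N_2^*\ge N^*$, where $N^*$ is defined in the context.
   Context: $N^*$ is the total population size at the (unique) steady state of the one-phase model $\partial_tn+\partial_an=-(k(a)+c_{tot}(N(t),0))n$, $n(t,0)=\int_0^{+\infty}bn\,da$, $N(t)=\int_0^{+\infty}n(t,a)da$. Explicitly: if $\int_0^{+\infty}b(a)e^{-\int_0^ak}da>1$, let $\mu_0>0$ be the unique solution of $\int_0^{+\infty}b(a)e^{-\int_0^ak(u)du-\mu_0a}da=1$ and let $N^*>0$ be the unique value with $c_{tot}(N^*,0)=\mu_0$; if $\int_0^{+\infty}b(a)e^{-\int_0^ak}da\le1$, then $N^*=0$. The steady-state system characterises non-trivial steady states $(N_1,N_2)=(\int n_1^*,\int n_2^* )$ of the two-phase model with competition kernels identically equal to one. *)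

(* Defs.v *)
From HB Require Import structures.
From mathcomp Require Import all_boot all_order all_algebra.
From mathcomp Require Import all_classical all_reals all_analysis.
Set Implicit Arguments. Unset Strict Implicit. Unset Printing Implicit Defensive.
Import Order.TTheory GRing.Theory Num.Theory.
Import numFieldNormedType.Exports.
Local Open Scope classical_set_scope.
Local Open Scope ring_scope.

Section defs.
Context {R : realType}.
Local Notation mu := (@lebesgue_measure R).

Definition cumul (k : R -> R) (a : R) : \bar R :=
  (\int[mu]_(u in `[0%R, a]%classic) (k u)%:E)%E.

(* surv k m a = exp(- \int_0^a k - m a), with exp(-oo) = 0 *)
Definition surv (k : R -> R) (m : R) (a : R) : \bar R :=
  expeR (- cumul k a - (m * a)%:E)%E.

Definition Iplus (f : R -> \bar R) : \bar R :=
  (\int[mu]_(a in `[0%R, +oo[%classic) f a)%E.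

Definition dx (f : R -> R -> R) (x y : R) : R := derive1 (fun t => f t y) x.
Definition dy (f : R -> R -> R) (x y : R) : R := derive1 (fun t => f x t) y.

Definition partials_on_Rplus2 (f : R -> R -> R) : Prop :=
  forall x y, 0 <= x -> 0 <= y ->
    derivable (fun t => f t y) x 1 /\ derivable (fun t => f x t) y 1.

Definition leb2 := (mu \x mu)%E.

Definition Linfty_loc (f : R -> R -> R) : Prop :=
  measurable_fun setT (fun p : R * R => f p.1 p.2) /\
  forall r : R, 0 < r -> exists M : R,
    {ae leb2, forall p : R * R, `|p.1| <= r -> `|p.2| <= r -> `|f p.1 p.2| <= M}.

(* N is the total population N^* at the steady state of the one-phase model *)
Definition is_Nstar (k b : R -> R) (ctot : R -> R -> R) (N : R) : Prop :=
  ((1 < Iplus (fun a => (b a)%:E * surv k 0 a))%E /\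
    exists mu0 : R, 0 < mu0 /\
      Iplus (fun a => (b a)%:E * surv k mu0 a)%E = 1%E /\
      0 < N /\ ctot N 0 = mu0)
  \/ ((Iplus (fun a => (b a)%:E * surv k 0 a) <= 1)%E /\ N = 0).

End defs.

(* Main.v *)
Require Import Defs.
From HB Require Import structures.
From mathcomp Require Import all_boot all_order all_algebra.
From mathcomp Require Import all_classical all_reals all_analysis.
Import Order.TTheory GRing.Theory Num.Theory.
Import numFieldNormedType.Exports.
Local Open Scope classical_set_scope.
Local Open Scope ring_scope.
From mathcomp Require Import measurable_realfun.
From mathcomp Require Import ring lra.

Section phi.
Context {R : realType}.
Local Notation mu := (@lebesgue_measure R).
Local Open Scope ereal_scope.
Variable U : nat -> set R.
Hypothesis oU : forall n, open (U n).

Definition phi (t : R) : \bar R :=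
  \sum_(0 <= n <oo) ((n%:R)%:E * mu (U n `&` `[0%R, t]%classic)).

Lemma mUI n t : measurable (U n `&` `[0%R, t]%classic).
Proof. apply: measurableI; [exact: open_measurable | exact: measurable_itv]. Qed.

Lemma phi_ge0 t : 0 <= phi t.
Proof. by apply: nneseries_ge0 => n _ _; apply: mule_ge0. Qed.

Lemma phi_le s t : (s <= t)%R -> phi s <= phi t.
Proof.
move=> st; apply: lee_nneseries.
  by move=> n _ _; apply: mule_ge0.
move=> n _; apply: lee_wpmul2l => //; apply: le_measure; rewrite ?inE; try exact: mUI.
by apply: setIS => x /=; rewrite !in_itv /= => /andP[-> /le_trans]; apply.
Qed.

Lemma mu_oc (s t : R) : (s <= t)%R -> mu `]s, t]%classic = (t - s)%:E.
Proof.
move=> st; rewrite lebesgue_measure_itv /= lte_fin.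
case: ltP => [_|ts]; first by rewrite EFinB.
have -> : t = s by apply/eqP; rewrite eq_le st ts.
by rewrite subrr.
Qed.

Lemma phi_step n s t : (0 <= s)%R -> (s <= t)%R -> `[s, t]%classic `<=` U n ->
  phi s + (n%:R * (t - s))%:E <= phi t.
Proof.
move=> s0 st stU.
have Hn : mu (U n `&` `[0%R, s]%classic) + (t - s)%:E <= mu (U n `&` `[0%R, t]%classic).
  rewrite -mu_oc // -measureU; [| exact: mUI | exact: measurable_itv | ].
  - apply: le_measure; rewrite ?inE; [apply: measurableU; [exact: mUI|exact: measurable_itv] | exact: mUI |].
    move=> x [[Ux /=]|].
      rewrite !in_itv /= => /andP[-> xs]; split => //=; exact: (le_trans xs st).
    rewrite /= in_itv /= => /andP[sx xt]; split.
      by apply: stU; rewrite /= in_itv /= xt (ltW sx).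
    by rewrite /= in_itv /= xt (le_trans s0 (ltW sx)).
  - apply/seteqP; split => x //= [[_]]; rewrite !in_itv /= => /andP[_ xs] /andP[sx _].
    by move: (lt_le_trans sx xs); rewrite ltxx.
rewrite /phi (@nneseriesD1 _ _ n) //; last by move=> k _; apply: mule_ge0.
rewrite [X in _ <= X](@nneseriesD1 _ _ n) //; last by move=> k _; apply: mule_ge0.
rewrite addeAC; apply: leeD.
  rewrite EFinM -ge0_muleDr //; last by rewrite lee_fin subr_ge0.
  by apply: lee_wpmul2l.
apply: lee_nneseries.
  by move=> k _ _; apply: mule_ge0.
move=> k _; apply: lee_wpmul2l => //; apply: le_measure; rewrite ?inE; try exact: mUI.
by apply: setIS => x /=; rewrite !in_itv /= => /andP[-> /le_trans]; apply.
Qed.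

Lemma phi_bound (e : R) : (0 <= e)%R ->
  (forall n, n%:R%:E * mu (U n) <= (e / (2 ^ n.+1)%:R)%:E) ->
  forall t, phi t <= e%:E.
Proof.
move=> e0 HU t; apply: le_trans (epsilon_trick0 xpredT e0).
apply: lee_nneseries; first by move=> k _ _; apply: mule_ge0.
move=> n _; apply: le_trans (HU n); apply: lee_wpmul2l => //.
by apply: le_measure; rewrite ?inE; [exact: mUI | exact: open_measurable | apply: subIsetl].
Qed.
End phi.
Section A.
Context {R : realType}.
Lemma deriv_right (g : R -> R) s (eps : R) : derivable g s 1 -> 0 < eps ->
  exists2 δ, 0 < δ & forall t, s < t < s + δ -> g t - g s <= ('D_1 g s + eps) * (t - s).
Proof.
move=> dg e0.
have /cvgrPdist_lt/(_ _ e0) := dg.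
move=> /nbhs_ballP[δ δ0 Hδ].
exists δ => // t /andP[st tsd].
have ts0 : 0 < t - s by rewrite subr_gt0.
have := Hδ (t - s).
rewrite /ball /= sub0r normrN gtr0_norm // ltrBlDr addrC tsd gt_eqF // => /(_ isT isT).
rewrite -/('D_1 g s) /= [_%:A]mulr1 subrK distrC => /(le_lt_trans (ler_norm _)) H.
move: H.
rewrite ltrBlDr [_ *: _]mulrC ltr_pdivrMr // addrC => /ltW.
by rewrite addrC [eps + _]addrC.
Qed.
Local Notation mu := (@lebesgue_measure R).

Lemma deriv_ae_le0 (g : R -> R) (L : R) (Z : set R) :
  0 <= L -> measurable Z -> mu Z = 0%E ->
  (forall y, 0 <= y <= L -> derivable g y 1) ->
  (forall y, 0 <= y <= L -> ~ Z y -> 'D_1 g y <= 0) ->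
  g L <= g 0.
Proof.
move=> L0 mZ Z0 dg dZ.
apply/ler_addgt0Pr => e' e'0.
have L10 : 0 < L + 1 by rewrite ltr_wpDl.
pose e := e' / (L + 1).
have e0 : 0 < e by rewrite divr_gt0.
have hU : forall n : nat, exists V : set R, [/\ open V, Z `<=` V &
    (n%:R%:E * mu V <= (e / (2 ^ n.+1)%:R)%:E)%E].
  move=> n.
  pose w := e / (2 ^ n.+1)%:R / n.+1%:R.
  have w0 : 0 < w by rewrite !divr_gt0 // ltr0n expn_gt0.
  have muZ : (mu Z < +oo)%E by rewrite Z0 ltry.
  have [V [oV ZV HV]] := lebesgue_regularity_outer mZ muZ w0.
  exists V; split => //.
  have mV : measurable V by exact: open_measurable.
  have muV : (mu V <= w%:E)%E.
    apply: (@le_trans _ _ (mu (Z `|` (V `\` Z)))).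
      apply: le_measure; rewrite ?inE; [exact: mV | by apply: measurableU => //; apply: measurableD | ].
      by move=> x Vx; have [Zx|nZx] := pselect (Z x); [left|right].
    apply: le_trans (measureU2 _ _ _) _ => //; first by apply: measurableD.
    rewrite [X in (X + _ <= _)%E](_ : _ = 0%E); last exact: Z0.
    by rewrite add0e ltW.
  apply: le_trans (lee_wpmul2l _ muV) _ => //.
  rewrite -EFinM lee_fin /w mulrCA; apply: ler_piMr.
    by rewrite divr_ge0 // ltW.
  by rewrite ler_pdivrMr ?ltr0n // mul1r ler_nat.
have [U HU] := choice hU.
have oU n : open (U n) by case: (HU n).
pose h t := g t - g 0 - e * t.
pose S := [set t | 0 <= t <= L /\ ((h t)%:E <= phi U t)%E].
have S0 : S 0.
  by split; [rewrite lexx L0 | rewrite /h subrr mulr0 subr0; exact: phi_ge0].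
have hasS : has_sup S by split; [exists 0 | exists L => t [/andP[_ ]]].
pose s := sup S.
have s0 : 0 <= s by apply: sup_upper_bound.
have sL : s <= L by apply: ge_sup; [exists 0 | move=> t [/andP[_ tL] _]].
have sLb : 0 <= s <= L by rewrite s0 sL.
have Qs : ((h s)%:E <= phi U s)%E.
  apply/lee_addgt0Pr => η η0.
  have gc : {for s, continuous g}.
    by apply: differentiable_continuous; rewrite -derivable1_diffP; apply: dg.
  have /cvgrPdist_lt/(_ _ η0)/nbhs_ballP[δ δ0 Hδ] := gc.
  have [t St st] := sup_adherent δ0 hasS.
  have ts : t <= s by apply: sup_upper_bound.
  have hst : h s <= h t + η.
    have : `|g s - g t| < η.
      apply: Hδ; rewrite /ball /= ger0_norm ?subr_ge0 // ltrBlDr.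
      by move: st; rewrite ltrBlDr addrC.
    move=> /(le_lt_trans (ler_norm _)) => gst.
    have : e * t <= e * s by rewrite ler_wpM2l // ltW.
    rewrite /h; lra.
  apply: (@le_trans _ _ ((h t)%:E + η%:E)%E); first by rewrite -EFinD lee_fin.
  apply: leeD => //; case: St => _ Qt; apply: le_trans Qt _.
  exact: phi_le U oU t s ts.
have sLeq : s = L.
  apply/eqP; rewrite eq_le sL /= leNgt; apply/negP => sLt.
  suff [δ δ0 Hδ] : exists2 δ, 0 < δ & forall t, s < t < s + δ -> ((h t)%:E <= phi U t)%E.
    pose m := Num.min δ (L - s).
    have m0 : 0 < m by rewrite lt_min δ0 subr_gt0 sLt.
    pose t := s + m / 2.
    have st : s < t by rewrite ltrDl divr_gt0.
    have m2 : m / 2 < m by rewrite ltr_pdivrMr // ltr_pMr // ltr1n.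
    have tL : t <= L.
      have : m <= L - s by rewrite ge_min lexx orbT.
      rewrite /t; lra.
    have tsd : t < s + δ.
      have : m <= δ by rewrite ge_min lexx.
      rewrite /t; lra.
    have : S t by split; [rewrite tL (le_trans s0 (ltW st)) | apply: Hδ; rewrite st tsd].
    by move=> /(sup_upper_bound hasS); rewrite leNgt st.
  have [Zs|nZs] := pselect (Z s).
  - pose D := 'D_1 g s.
    pose n := (Num.trunc `|D|).+2.
    have Dn : D + 1 <= n%:R.
      have := truncnS_gt `|D|; rewrite /n -addn1 natrD => H.
      have := ler_norm D; lra.
    have [δ1 δ10 Hδ1] := @deriv_right g s 1 (dg s sLb) ltr01.
    have [oUn ZUn _] := HU n.
    have : nbhs s (U n) by apply: open_nbhs_nbhs; split => //; apply: ZUn.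
    move=> /nbhs_ballP[δ2 δ20 Hδ2].
    exists (Num.min δ1 δ2); first by rewrite lt_min δ10 δ20.
    move=> t /andP[st tsd].
    have tsd1 : t < s + δ1 by apply: lt_le_trans tsd _; rewrite lerD2l ge_min lexx.
    have tsd2 : t < s + δ2 by apply: lt_le_trans tsd _; rewrite lerD2l ge_min lexx orbT.
    have gts := Hδ1 t (ltac:(by rewrite st tsd1)).
    have sub : `[s, t]%classic `<=` U n.
      move=> x /=; rewrite in_itv /= => /andP[sx xt]; apply: Hδ2.
      rewrite /ball /= ler0_norm ?subr_le0 // opprB ltrBlDr addrC.
      exact: le_lt_trans xt tsd2.
    have := phi_step U oU n s t s0 (ltW st) sub.
    apply: le_trans; apply: (@le_trans _ _ ((h s)%:E + (n%:R * (t - s))%:E)%E); last first.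
      by apply: leeD.
    rewrite -EFinD lee_fin.
    have : (D + 1) * (t - s) <= n%:R * (t - s) by rewrite ler_wpM2r // subr_ge0 ltW.
    have : 0 <= e * (t - s) by rewrite mulr_ge0 // ?subr_ge0 ltW.
    rewrite /h; move: gts; rewrite -/D; lra.
  - have D0 := dZ s sLb nZs.
    have [δ1 δ10 Hδ1] := @deriv_right g s e (dg s sLb) e0.
    exists δ1 => // t /andP[st tsd].
    have gts := Hδ1 t (ltac:(by rewrite st tsd)).
    have : ('D_1 g s + e) * (t - s) <= e * (t - s).
      by apply: ler_wpM2r; [rewrite subr_ge0 ltW | lra].
    move=> H1.
    apply: le_trans (phi_le U oU s t (ltW st)); apply: le_trans Qs; rewrite lee_fin /h.
    lra.
have QL : ((h L)%:E <= e%:E)%E.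
  apply: le_trans (phi_bound U oU e (ltW e0) _ L).
    by rewrite -sLeq.
  by move=> n; case: (HU n).
move: QL; rewrite lee_fin /h.
have : e * (L + 1) = e' by rewrite /e divfK // gt_eqF.
lra.
Qed.
End A.
Section B.
Context {R : realType}.
Local Notation mu := (@lebesgue_measure R).

Lemma ae_section (N : set (R * R)) : measurable N -> (leb2 N = 0)%E ->
  exists Nx : set R, [/\ measurable Nx, mu Nx = 0%E &
    forall x, ~ Nx x -> mu (xsection N x) = 0%E].
Proof.
move=> mN N0.
have mf : measurable_fun setT (fun x => mu (xsection N x)).
  exact: (measurable_fun_xsection mu mN).
have := (ae_eq_integral_abs mu measurableT mf).1.
have -> : (\int[mu]_(x in setT) `|mu (xsection N x)|)%E = leb2 N.
  rewrite /leb2 /product_measure1; apply: eq_integral => x _.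
  by rewrite gee0_abs.
move=> /(_ N0) [Nx [mNx Nx0 HNx]].
exists Nx; split => // x nNx; apply: contrapT => H; apply: nNx; apply: HNx => /=.
by move=> /(_ I).
Qed.

Lemma good_point (Nx : set R) (a δ : R) : measurable Nx -> mu Nx = 0%E -> 0 < δ ->
  exists x, a < x < a + δ /\ ~ Nx x.
Proof.
move=> mNx Nx0 d0; apply: contrapT => H.
have : (mu `]a, (a + δ)%R[%classic <= mu Nx)%E.
  apply: le_measure; rewrite ?inE //.
  move=> x /=; rewrite in_itv /= => xin; apply: contrapT => nN; apply: H.
  by exists x.
rewrite Nx0 lebesgue_measure_itv /= lte_fin ltrDl d0 lee_fin addrAC subrr add0r.
by rewrite leNgt d0.
Qed.
End B.
Section K.
Context {R : realType}.
Local Notation mu := (@lebesgue_measure R).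

Lemma key (C : R -> R -> R) (N1 N2 : R) :
  0 <= N1 -> 0 <= N2 ->
  partials_on_Rplus2 C ->
  (forall x' y', 0 <= x' -> 0 <= y' ->
     {ae leb2, forall p : R * R, 0 <= p.1 -> 0 <= p.2 ->
        `|dy C p.1 p.2| <= dx C x' y'}) ->
  C N1 N2 <= C (N1 + N2) 0.
Proof.
move=> N10 N20 dC hae.
have [->|N2pos] := eqVneq N2 0; first by rewrite addr0.
have N2gt : 0 < N2 by rewrite lt_neqAle eq_sym N2pos N20.
pose f := fun t => C t 0.
have [ζ ζin Hζ] : exists2 ζ, ζ \in `]N1, N1 + N2[ &
    f (N1 + N2) - f N1 = dx C ζ 0 * (N1 + N2 - N1).
  apply: (@MVT R f (fun x => dx C x 0)); first by rewrite ltrDl.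
    move=> x; rewrite in_itv /= => /andP[N1x _].
    have dfx : derivable f x 1 by case: (dC x 0 (le_trans N10 (ltW N1x)) (lexx 0)).
    rewrite /dx derive1E; exact: derivableP.
  apply: derivable_within_continuous => x; rewrite in_itv /= => /andP[N1x _].
  by case: (dC x 0 (le_trans N10 N1x) (lexx 0)).
have ζ0 : 0 <= ζ by move: ζin; rewrite in_itv /= => /andP[/ltW/(le_trans N10)].
set M := dx C ζ 0.
have [Nb [mNb Nb0 HNb]] := hae ζ 0 ζ0 (lexx 0).
have [Nx [mNx Nx0 HNx]] := ae_section Nb mNb Nb0.
have E : C (N1 + N2) 0 = C N1 0 + M * N2.
  move: Hζ; rewrite /f addrAC subrr add0r /M; lra.
rewrite E; apply/ler_addgt0Pr => η η0.
have cont y : 0 <= y -> {for N1, continuous (fun t => C t y)}.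
  move=> y0; apply: differentiable_continuous; rewrite -derivable1_diffP.
  by case: (dC N1 y N10 y0).
have η2 : 0 < η / 2 by rewrite divr_gt0.
have /cvgrPdist_lt/(_ _ η2)/nbhs_ballP[δa δa0 Ha] := cont N2 N20.
have /cvgrPdist_lt/(_ _ η2)/nbhs_ballP[δb δb0 Hb] := cont 0 (lexx 0).
have mpos : 0 < Num.min δa δb by rewrite lt_min δa0 δb0.
have [x [/andP[N1x xd] nNx]] := good_point Nx N1 (Num.min δa δb) mNx Nx0 mpos.
have x0 : 0 <= x by apply: le_trans N10 (ltW N1x).
have ig (y : R) : 0 <= y -> is_derive y 1 (fun y => C x y - M * y) (dy C x y - M).
  move=> y0.
  have d1 : derivable (fun t => C x t) y 1 by case: (dC x y x0 y0).
  have := is_deriveB (derivableP d1) (is_deriveZ M (is_derive_id y 1)).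
  have -> : (fun t => C x t) - M \*: id = (fun y => C x y - M * y).
    by apply/funext => t.
  by rewrite /dy derive1E [M *: 1]mulr1.
have hx : C x N2 - M * N2 <= C x 0 - M * 0.
  apply: (@deriv_ae_le0 _ (fun y => C x y - M * y) N2 (xsection Nb x)) => //.
  - exact: measurable_xsection.
  - exact: HNx.
  - by move=> y /andP[y0 _]; case: (ig y y0).
  move=> y /andP[y0 _] nS; case: (ig y y0) => _ ->; rewrite subr_le0.
  have P : 0 <= x -> 0 <= y -> `|dy C x y| <= M.
    apply: contrapT => H; apply: nS; rewrite /xsection /= inE; exact: HNb.
  exact: le_trans (ler_norm _) (P x0 y0).
have xa : ball N1 δa x.
  rewrite /ball /= ler0_norm ?subr_le0 ?ltW // opprB ltrBlDl.
  apply: lt_le_trans xd _; rewrite lerD2l ge_min lexx //.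
have xb : ball N1 δb x.
  rewrite /ball /= ler0_norm ?subr_le0 ?ltW // opprB ltrBlDl.
  apply: lt_le_trans xd _; rewrite lerD2l ge_min lexx orbT //.
have := Ha x xa; have := Hb x xb.
rewrite !ltr_distl => /andP[h1 h2] /andP[h3 h4].
move: hx; lra.
Qed.
End K.
Section K2.
Context {R : realType}.
Lemma ctot_lt (C : R -> R -> R) a b : 0 <= a -> a < b -> partials_on_Rplus2 C ->
  (forall x, 0 <= x -> 0 < dx C x 0) -> C a 0 < C b 0.
Proof.
move=> a0 ab dC hpos.
pose f := fun t => C t 0.
have [ζ ζin Hζ] : exists2 ζ, ζ \in `]a, b[ & f b - f a = dx C ζ 0 * (b - a).
  apply: (@MVT R f (fun x => dx C x 0)) => //.
    move=> x; rewrite in_itv /= => /andP[ax _].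
    have dfx : derivable f x 1 by case: (dC x 0 (le_trans a0 (ltW ax)) (lexx 0)).
    rewrite /dx derive1E; exact: derivableP.
  apply: derivable_within_continuous => x; rewrite in_itv /= => /andP[ax _].
  by case: (dC x 0 (le_trans a0 ax) (lexx 0)).
have ζ0 : 0 <= ζ by move: ζin; rewrite in_itv /= => /andP[/ltW/(le_trans a0)].
have : 0 < dx C ζ 0 * (b - a) by rewrite mulr_gt0 ?hpos // subr_gt0.
by rewrite -Hζ /f subr_gt0.
Qed.
End K2.
Section I.
Context {R : realType}.
Local Notation mu := (@lebesgue_measure R).
Local Notation D := (`[0%R, +oo[%classic : set R).

Lemma cumul_ge0 (k : R -> R) a : (forall u, 0 <= u -> 0 <= k u) -> 0 <= a ->
  (0 <= cumul k a)%E.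
Proof.
move=> k0 a0; apply: integral_ge0 => u /=; rewrite in_itv /= => /andP[u0 _].
by rewrite lee_fin k0.
Qed.

Lemma cumul_le (k : R -> R) a a' : (forall u, 0 <= u -> 0 <= k u) ->
  measurable_fun D k -> 0 <= a -> a <= a' -> (cumul k a <= cumul k a')%E.
Proof.
move=> k0 mk a0 aa'; apply: ge0_subset_integral => //; try exact: measurable_itv.
- apply/measurable_EFinP; apply: (measurable_funS _ _ mk) => //.
  by move=> u /=; rewrite !in_itv /= => /andP[-> _].
- by move=> u /=; rewrite in_itv /= => /andP[u0 _]; rewrite lee_fin k0.
- by move=> u /=; rewrite !in_itv /= => /andP[-> ua]; rewrite (le_trans ua aa').
Qed.

Definition Tf (k : R -> R) (a : R) : R := fine (expeR (- cumul k (Num.max a 0%R)))%E.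

Lemma expeR_fin (x : \bar R) : (0 <= x)%E -> expeR (- x) \is a fin_num.
Proof. by case: x. Qed.

Lemma Tf_noninc (k : R -> R) : (forall u, 0 <= u -> 0 <= k u) -> measurable_fun D k ->
  {homo Tf k : x y /~ x <= y}.
Proof.
move=> k0 mk x y xy; rewrite /Tf.
have c0 z : (0 <= cumul k (Num.max z 0%R))%E by apply: cumul_ge0 => //; rewrite le_max lexx orbT.
apply: fine_le; [exact: expeR_fin | exact: expeR_fin |].
rewrite lee_expeR leeN2; apply: cumul_le => //; first by rewrite le_max lexx orbT.
by rewrite ge_max le_max xy /= le_max lexx orbT.
Qed.

Lemma Tf_ge0 (k : R -> R) (a : R) : 0 <= Tf k a.
Proof. by rewrite /Tf fine_ge0 // expeR_ge0. Qed.

Lemma surv_Tf (k : R -> R) (m a : R) : (forall u, 0 <= u -> 0 <= k u) -> 0 <= a ->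
  surv k m a = (Tf k a * expR (- (m * a)))%:E.
Proof.
move=> k0 a0; rewrite /surv /Tf (max_idPl a0).
have := cumul_ge0 _ _ k0 a0.
case: (cumul k a) => [r| |] //= r0.
  by rewrite expRD.
by rewrite mul0r.
Qed.

Definition Gf (k b : R -> R) (m a : R) := b a * Tf k a * expR (- (m * a)).

Lemma Gf_meas (k b : R -> R) (m : R) : (forall u, 0 <= u -> 0 <= k u) -> measurable_fun D k ->
  measurable_fun D b -> measurable_fun D (Gf k b m).
Proof.
move=> k0 mk mb.
apply: measurable_funM; first apply: measurable_funM => //.
  apply: nonincreasing_measurable => // x y xy. exact: (@Tf_noninc k k0 mk y x xy).
apply: measurable_funTS.
apply: measurableT_comp; first exact: measurable_expR.
apply: measurableT_comp; first exact: oppr_measurable.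
exact: measurable_funM.
Qed.

Lemma Gf_ge0 (k b : R -> R) (m a : R) : (forall u, 0 <= u -> 0 <= b u) -> 0 <= a -> 0 <= Gf k b m a.
Proof.
move=> b0 a0; rewrite /Gf !mulr_ge0 ?b0 ?Tf_ge0 //; exact: expR_ge0.
Qed.

Lemma Iplus_Gf (k b : R -> R) (m : R) : (forall u, 0 <= u -> 0 <= k u) ->
  Iplus (fun a => (b a)%:E * surv k m a)%E = (\int[mu]_(a in D) (Gf k b m a)%:E)%E.
Proof.
move=> k0; apply: eq_integral => a; rewrite inE /= in_itv /= andbT => a0.
by rewrite surv_Tf // -EFinM /Gf mulrA.
Qed.

Lemma strict_contra (k b : R -> R) (m mu0 : R) :
  (forall u, 0 <= u -> 0 <= k u /\ 0 <= b u) ->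
  measurable_fun D k -> measurable_fun D b -> m < mu0 ->
  Iplus (fun a => (b a)%:E * surv k mu0 a)%E = 1%E ->
  (Iplus (fun a => (b a)%:E * surv k m a) <= 1)%E -> False.
Proof.
move=> kb0 mk mb mm0.
have k0 u : 0 <= u -> 0 <= k u by move=> /kb0[].
have b0 u : 0 <= u -> 0 <= b u by move=> /kb0[].
rewrite !Iplus_Gf // => I0 I1.
have mD : measurable D by exact: measurable_itv.
have GE a : Gf k b m a = Gf k b mu0 a * expR ((mu0 - m) * a).
  rewrite /Gf -!mulrA -expRD; do 2 congr (_ * _); congr expR; ring.
pose dd a := Gf k b m a - Gf k b mu0 a.
have Dge0 a : D a -> 0 <= a by rewrite /= in_itv /= andbT.
have dd0 a : D a -> 0 <= dd a.
  move=> /Dge0 a0; rewrite /dd GE subr_ge0 ler_peMr ?Gf_ge0 //.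
  apply: le_trans (expR_ge1Dx _); rewrite lerDl mulr_ge0 // subr_ge0 ltW //.
have mG x : measurable_fun D (Gf k b x) by exact: Gf_meas.
have mdd : measurable_fun D dd by apply: measurable_funB.
have Hsplit : (\int[mu]_(a in D) (Gf k b m a)%:E =
    \int[mu]_(a in D) (Gf k b mu0 a)%:E + \int[mu]_(a in D) (dd a)%:E)%E.
  rewrite -(ge0_integralD mu mD (f1 := fun a => (Gf k b mu0 a)%:E) (f2 := fun a => (dd a)%:E)).
  - by apply: eq_integral => a _; rewrite -EFinD /dd addrC subrK.
  - by move=> a /Dge0 a0; rewrite lee_fin Gf_ge0.
  - exact: (proj2 (measurable_EFinP _ _) (mG mu0)).
  - by move=> a /dd0; rewrite lee_fin.
  - exact: (proj2 (measurable_EFinP _ _) mdd).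
have Idd : (\int[mu]_(a in D) (dd a)%:E = 0)%E.
  apply/eqP; rewrite eq_le integral_ge0 ?andbT; last by move=> a /dd0; rewrite lee_fin.
  by move: I1; rewrite Hsplit I0 -[X in (_ <= X)%E]adde0 leeD2lE.
have : ae_eq mu D (fun a => (dd a)%:E) (cst 0%E).
  apply/(ae_eq_integral_abs mu mD _).1; first by apply/measurable_EFinP.
  rewrite -Idd; apply: eq_integral => a /[!inE] /dd0 Ha.
  by rewrite gee0_abs // lee_fin.
move=> [N [mN N0 HN]].
have : (\int[mu]_(a in D) (Gf k b mu0 a)%:E = \int[mu]_(a in D) (cst 0%E) a)%E.
  apply: ae_eq_integral => //; first exact: (proj2 (measurable_EFinP _ _) (mG mu0)).
  exists (N `|` [set 0]); split.
  - by apply: measurableU.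
  - apply/eqP; rewrite eq_le measure_ge0 andbT.
    apply: le_trans (measureU2 _ _ _) _ => //.
    rewrite [X in (X + _ <= _)%E](_ : _ = 0%E); last exact: N0.
    by rewrite [X in (_ + X <= _)%E](_ : _ = 0%E) ?adde0 //; exact: lebesgue_measure_set1.
  move=> a /= Ha; apply: contrapT => Hn; apply: Ha => Da.
  have a0 : 0 < a.
    rewrite lt_neqAle Dge0 // andbT; apply/eqP => a0; apply: Hn; by right.
  have : dd a = 0.
    apply: contrapT => dn; apply: Hn; left; apply: HN => /= /(_ Da) [].
    exact: dn.
  rewrite /dd GE => /eqP; rewrite -{2}(mulr1 (Gf k b mu0 a)) -mulrBr mulf_eq0.
  case/orP => [/eqP -> //|]; rewrite subr_eq0 => /eqP.
  have : 1 < expR ((mu0 - m) * a) by rewrite expR_gt1 mulr_gt0 // subr_gt0.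
  by move=> /[swap] ->; rewrite ltxx.
by rewrite I0 integral0 => /eqP; rewrite onee_eq0.
Qed.
End I.

Theorem proposition4 (R : realType) (k d b bt : R -> R) (c eta ct : R -> R -> R) :
  (* k, d, b, bt >= 0 and measurable on R_+ *)
  (forall a, 0 <= a -> 0 <= k a /\ 0 <= d a /\ 0 <= b a /\ 0 <= bt a) ->
  measurable_fun (`[0%R, +oo[%classic : set R) k -> measurable_fun (`[0%R, +oo[%classic : set R) d ->
  measurable_fun (`[0%R, +oo[%classic : set R) b -> measurable_fun (`[0%R, +oo[%classic : set R) bt ->
  Iplus (fun a => (k a)%:E) = +oo%E ->
  Iplus (fun a => (d a)%:E) = +oo%E ->
  (1 < Iplus (fun a => (b a)%:E * surv k 0 a + (bt a)%:E * surv d 0 a))%E ->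
  (Iplus (fun a => (b a)%:E * surv k 0 a + (bt a)%:E * surv d 0 a) < +oo)%E ->
  (* c, eta, ct in L^oo_loc(R^2), vanish at (0,0), nonnegative on R_+^2 *)
  Linfty_loc c -> Linfty_loc eta -> Linfty_loc ct ->
  c 0 0 = 0 -> eta 0 0 = 0 -> ct 0 0 = 0 ->
  (forall x y, 0 <= x -> 0 <= y -> 0 <= c x y /\ 0 <= eta x y /\ 0 <= ct x y) ->
  let ctot := fun x y => c x y + eta x y in
  (* monotonicity assumptions on the partial derivatives, on R_+^2 *)
  partials_on_Rplus2 ctot -> partials_on_Rplus2 ct ->
  (forall x y, 0 <= x -> 0 <= y ->
     0 < dx ctot x y /\ 0 <= dy ctot x y /\ 0 <= dx ct x y /\ 0 < dy ct x y) ->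
  (forall x0 y0, 0 <= x0 -> 0 <= y0 ->
     (ct x0 y @[y --> +oo] --> +oo) /\ (c x y0 @[x --> +oo] --> +oo)) ->
  (* || d_y ctot ||_oo (over R_+^2) <= inf_{R_+^2} d_x ctot *)
  (forall x' y', 0 <= x' -> 0 <= y' ->
     {ae leb2, forall p : R * R, 0 <= p.1 -> 0 <= p.2 ->
        `|dy ctot p.1 p.2| <= dx ctot x' y'}) ->
  forall Nstar : R, is_Nstar k b ctot Nstar ->
  forall N1 N2 : R, 0 <= N1 -> 0 <= N2 ->
  (Iplus (fun a => (bt a)%:E * surv d (ct N1 N2) a)
     * Iplus (fun a => (k a + eta N1 N2)%:E * surv k (ctot N1 N2) a)
   + Iplus (fun a => (b a)%:E * surv k (ctot N1 N2) a) = 1)%E ->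
  (N1%:E * Iplus (fun a => surv d (ct N1 N2) a)
     * Iplus (fun a => (k a + eta N1 N2)%:E * surv k (ctot N1 N2) a)
   - N2%:E * Iplus (fun a => surv k (ctot N1 N2) a) = 0)%E ->
  Nstar <= N1 + N2.
Proof.
move=> hpos mk md mb mbt Ik Id I1 I2 Lc Le Lct c00 e00 ct00 cpos ctot dC dCt hder hlim hae
  Nstar HN N1 N2 N10 N20 eq1 eq2.
case: HN => [[_ [mu0 [mu0pos [Hmu0 [Npos Hc]]]]] | [_ ->]]; last by rewrite addr_ge0.
rewrite leNgt; apply/negP => Hlt.
have key1 := key ctot N1 N2 N10 N20 dC hae.
have lt2 : ctot (N1 + N2) 0 < ctot Nstar 0.
  apply: ctot_lt => //; first exact: addr_ge0.
  by move=> x x0; case: (hder x 0 x0 (lexx 0)).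
have mlt : ctot N1 N2 < mu0 by rewrite -Hc; exact: le_lt_trans key1 lt2.
have ceta0 : 0 <= eta N1 N2 by case: (cpos N1 N2 N10 N20) => _ [].
apply: (@strict_contra R k b (ctot N1 N2) mu0) => //.
- by move=> u u0; have [? [? [? ?]]] := hpos u u0; split.
- rewrite -eq1; apply: lee_paddl => //; apply: mule_ge0.
  + apply: integral_ge0 => a; rewrite /= in_itv /= andbT => a0.
    apply: mule_ge0; last exact: expeR_ge0.
    by have [? [? [? ?]]] := hpos a a0; rewrite lee_fin.
  + apply: integral_ge0 => a; rewrite /= in_itv /= andbT => a0.
    apply: mule_ge0; last exact: expeR_ge0.
    by have [? [? [? ?]]] := hpos a a0; rewrite lee_fin addr_ge0.
Qed.
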